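(* Let $n$ be a non-negative integer and let $x$ be an odd integer with $x\neq\pm1$. Let $P_n$ denote the $n$-th Legendre polynomial, $P_n(x)=\frac{1}{2^n}\sum_{k=0}^{n}\binom{n}{k}^2(x+1)^k(x-1)^{n-k}$. Then $$\omega_x\big(P_{2n+1}(x)\big)=1+\omega_x\Big((2n+1)\binom{2n}{n}\Big),\qquad \omega_x\big(P_{2n}(x)\big)=\omega_x\Big(\binom{2n}{n}\Big).$$
   Context: For an integer $x$ with $x\neq 0,\pm1$ and a nonzero integer $y$, $\omega_x(y)$ denotes the largest non-negative integer $e$ such that $x^e$ divides $y$. (For odd $x$, $P_n(x)$ is an integer.) *)

(* Defs.v *)
From mathcomp Require Import all_boot all_order all_algebra.
Set Implicit Arguments. Unset Strict Implicit. Unset Printing Implicit Defensive.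
Import Order.TTheory GRing.Theory Num.Theory.
Local Open Scope ring_scope.

(* The sum is computed exactly in int and divided by 2^n with integer
   division; for odd x the division is exact, so this is P_n(x). *)
Definition legendre (n : nat) (x : int) : int :=
  ((\sum_(k < n.+1) ('C(n, k) ^ 2)%N%:Z * (x + 1) ^+ k * (x - 1) ^+ (n - k))
     %/ (2 ^+ n))%Z.

(* omega_x(y): largest e with x^e | y.  For |x| >= 2 and y <> 0 any such e
   satisfies e <= |y|, so a bounded search over e < |y|+1 is exact. *)
Definition omega (x y : int) : nat :=
  (\max_(e < (`|y|%N).+1 | (x ^+ e %| y)%Z) e)%N.

(* Main.v *)
Require Import Defs.
From mathcomp Require Import all_boot all_order all_algebra.
From mathcomp Require Import zify ring.
Import Order.TTheory GRing.Theory Num.Theory.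

Definition Fp n j := \prod_(i < j) (2 * (2 * n + 2 * i + 1)).

Lemma F_id n j : (2 * n + 2 * j)`! * n`! = (2 * n)`! * (n + j)`! * Fp n j.
Proof.
elim: j => [|j IH]; first by rewrite /Fp big_ord0 !addn0 muln1 mulnC.
rewrite /Fp big_ord_recr /= -/(Fp n j).
have -> : (2 * n + 2 * j.+1) = (2 * n + 2 * j).+2 by lia.
rewrite !factS addnS factS.
have -> : (2 * n + 2 * j).+2 * ((2 * n + 2 * j).+1 * (2 * n + 2 * j)`!) * n`!
   = (2 * n + 2 * j).+2 * (2 * n + 2 * j).+1 * ((2 * n + 2 * j)`! * n`!) by ring.
rewrite IH.
have -> : (2 * n + 2 * j).+2 = 2 * (n + j).+1 by lia.
have -> : (2 * n + 2 * j).+1 = 2 * n + 2 * j + 1 by lia.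
ring.
Qed.

Lemma even_id n j : j <= n ->
  'C(2 * n, n + j) * 'C(2 * (n + j), 2 * n) * (2 * j)`! = 'C(2 * n, n) * ('C(n, j) * j`! * Fp n j).
Proof.
move=> jn.
have e1 : 'C(2 * n, n + j) * ((n + j)`! * (n - j)`!) = (2 * n)`!.
  have h : n + j <= 2 * n by lia.
  by have := bin_fact h; have -> : 2 * n - (n + j) = n - j by lia.
have e2 : 'C(2 * (n + j), 2 * n) * ((2 * n)`! * (2 * j)`!) = (2 * n + 2 * j)`!.
  have h : 2 * n <= 2 * (n + j) by lia.
  have h2 : 2 * (n + j) - 2 * n = 2 * j by lia.
  by have := bin_fact h; rewrite h2 mulnDr.
have e3 : 'C(2 * n, n) * (n`! * n`!) = (2 * n)`!.
  have h : n <= 2 * n by lia.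
  by have := bin_fact h; have -> : 2 * n - n = n by lia.
have e4 : 'C(n, j) * (j`! * (n - j)`!) = n`! by apply: bin_fact.
have e5 := F_id n j.
have K0 : 0 < (n + j)`! * (n - j)`! * (2 * n)`! * n`! by rewrite !muln_gt0 !fact_gt0.
apply/eqP; rewrite -(eqn_pmul2r K0); apply/eqP.
transitivity ('C(2 * n, n + j) * ((n + j)`! * (n - j)`!) *
   ('C(2 * (n + j), 2 * n) * ((2 * n)`! * (2 * j)`!)) * n`!); first ring.
rewrite e1 e2 -mulnA e5.
transitivity (('C(2 * n, n) * (n`! * n`!)) * ((2 * n)`! * (n + j)`! * Fp n j)); last first.
  by rewrite -e4; ring.
by rewrite e3; ring.
Qed.

Lemma odd_id n j : j <= n ->
  'C((2 * n).+1, n + 1 + j) * 'C(2 * (n + 1 + j), (2 * n).+1) * (2 * j).+1`!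
  = 'C(2 * n, n) * ('C(n, j) * j`! * Fp n j.+1).
Proof.
move=> jn.
have e1 : 'C((2 * n).+1, n + 1 + j) * ((n + 1 + j)`! * (n - j)`!) = (2 * n).+1`!.
  have h : n + 1 + j <= (2 * n).+1 by lia.
  by have := bin_fact h; have -> : (2 * n).+1 - (n + 1 + j) = n - j by lia.
have e2 : 'C(2 * (n + 1 + j), (2 * n).+1) * ((2 * n).+1`! * (2 * j).+1`!)
     = (2 * n + 2 * j.+1)`!.
  have h : (2 * n).+1 <= 2 * (n + 1 + j) by lia.
  have h2 : 2 * (n + 1 + j) - (2 * n).+1 = (2 * j).+1 by lia.
  have h3 : 2 * (n + 1 + j) = 2 * n + 2 * j.+1 by lia.
  by have := bin_fact h; rewrite h2 h3.
have e3 : 'C(2 * n, n) * (n`! * n`!) = (2 * n)`!.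
  have h : n <= 2 * n by lia.
  by have := bin_fact h; have -> : 2 * n - n = n by lia.
have e4 : 'C(n, j) * (j`! * (n - j)`!) = n`! by apply: bin_fact.
have e5 := F_id n j.+1.
have h6 : n + j.+1 = n + 1 + j by lia.
rewrite h6 in e5.
have K0 : 0 < (n + 1 + j)`! * (n - j)`! * (2 * n).+1`! * n`! by rewrite !muln_gt0 !fact_gt0.
apply/eqP; rewrite -(eqn_pmul2r K0); apply/eqP.
transitivity ('C((2 * n).+1, n + 1 + j) * ((n + 1 + j)`! * (n - j)`!) *
   ('C(2 * (n + 1 + j), (2 * n).+1) * ((2 * n).+1`! * (2 * j).+1`!)) * n`!); first ring.
rewrite e1 e2 -mulnA e5.
transitivity (('C(2 * n, n) * (n`! * n`!)) * ((2 * n).+1`! * (n + 1 + j)`! * Fp n j.+1)); last first.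
  by rewrite -e4; ring.
by rewrite e3; ring.
Qed.

Lemma Fp_odd n j : (2 * n).+1 %| Fp n j.+1.
Proof. rewrite /Fp big_ord_recl /= muln0 addn0 addn1; exact/dvdn_mulr/dvdn_mull/dvdnn. Qed.

Lemma Fp1 n : Fp n 1 = 2 * (2 * n).+1.
Proof. by rewrite /Fp big_ord1 /= muln0 addn0 addn1. Qed.


Lemma sfact_bound p K m : 2 < p -> 0 < m ->
  2 * (\sum_(0 <= k < K) m %/ p ^ k.+1) < m.
Proof.
move=> p2; elim: K m => [|K IH] m m0; first by rewrite big_geq // muln0.
rewrite big_nat_recl //.
have -> : \sum_(0 <= i < K) m %/ p ^ i.+2 = \sum_(0 <= i < K) (m %/ p) %/ p ^ i.+1.
  by apply: eq_bigr => i _; rewrite expnS divnMA.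
case q0: (m %/ p == 0).
  move/eqP: q0 => ->; rewrite big1 ?expn1 => [|i _]; last by rewrite div0n.
  lia.
have qpos : 0 < m %/ p by rewrite lt0n q0.
have := IH _ qpos; rewrite expn1.
have : (m %/ p) * p <= m by rewrite leq_trunc_div.
move=> h1 h2. nia.
Qed.

Lemma logn_fact_bound p m : prime p -> 2 < p -> 0 < m -> 2 * logn p m`! < m.
Proof.
move=> pp p2 m0; rewrite logn_fact //.
rewrite -(add0n 1) big_addn subn1 /=.
have := sfact_bound p m m p2 m0.
congr (_ < _); congr (_ * _); apply: eq_bigr => i _; by rewrite addn1.
Qed.

Lemma keyG X f a m k : odd X -> (X ^ f %| a * m`!) -> m <= k.*2.+1 ->
  X ^ f %| a * X ^ k.
Proof.
move=> oX hd hm.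
have X0 : 0 < X by rewrite lt0n; apply/eqP => X0; rewrite X0 in oX.
case: (posnP a) => [->|a0]; first by rewrite mul0n dvdn0.
apply/dvdn_partP; first by rewrite expn_gt0 X0.
move=> p; rewrite mem_primes => /and3P[pp _ pdv].
have pX : p %| X by move: pdv; rewrite Euclid_dvdX // => /andP[].
have p2 : 2 < p.
  rewrite ltn_neqAle prime_gt1 // andbT; apply/eqP => p2.
  by move: pX; rewrite -p2 dvdn2 oX.
rewrite p_part pfactor_dvdn //; last by rewrite muln_gt0 a0 expn_gt0 X0.
have lX : 0 < logn p X by rewrite logn_gt0 mem_primes pp X0.
have hl : logn p (X ^ f) <= logn p (a * m`!).
  rewrite -pfactor_dvdn ?muln_gt0 ?a0 ?fact_gt0 //.
  exact: dvdn_trans (pfactor_dvdnn p (X ^ f)) hd.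
move: hl; rewrite !lognM ?a0 ?fact_gt0 ?expn_gt0 ?X0 // !lognX.
have hv : logn p m`! <= k.
  clear hd; case: m hm => [|m] hm; first by rewrite fact0 logn1.
  have := logn_fact_bound p m.+1 pp p2 (ltn0Sn m); lia.
nia.
Qed.


Lemma even_term X f n j : odd X -> X ^ f %| 'C(2 * n, n) -> 0 < j -> j <= n ->
  X ^ f.+1 %| 'C(2 * n, n + j) * 'C(2 * (n + j), 2 * n) * X ^ (2 * j).
Proof.
move=> oX hf j0 jn.
have h : X ^ f %| 'C(2 * n, n + j) * 'C(2 * (n + j), 2 * n) * (2 * j)`!.
  by rewrite even_id //; apply: dvdn_trans hf (dvdn_mulr _ _).
have hk := keyG _ _ _ _ j oX h (_ : 2 * j <= j.*2.+1); rewrite -mul2n in hk.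
have {hk} hk := hk (leqnSn _).
have -> : 2 * j = j + j by lia.
rewrite expnD mulnA expnSr; apply: dvdn_mul => //.
by rewrite -{1}(expn1 X) dvdn_exp2l.
Qed.

Lemma odd_term X f n j : odd X -> X ^ f %| (2 * n).+1 * 'C(2 * n, n) -> 0 < j -> j <= n ->
  X ^ f.+2 %| 'C((2 * n).+1, n + 1 + j) * 'C(2 * (n + 1 + j), (2 * n).+1) * X ^ (2 * j).+1.
Proof.
move=> oX hf j0 jn.
have h : X ^ f %| 'C((2 * n).+1, n + 1 + j) * 'C(2 * (n + 1 + j), (2 * n).+1) * (2 * j).+1`!.
  rewrite odd_id //; apply: dvdn_trans hf _.
  by rewrite mulnC dvdn_pmul2l ?bin_gt0 ?leq_pmull // dvdn_mull ?Fp_odd.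
have hk := keyG _ _ _ _ j oX h (_ : (2 * j).+1 <= j.*2.+1); rewrite -mul2n in hk.
have {hk} hk := hk (leqnn _).
have -> : (2 * j).+1 = j + j.+1 by lia.
rewrite expnD mulnA -addn2 expnD; apply: dvdn_mul => //.
by rewrite dvdn_exp2l.
Qed.

Local Open Scope ring_scope.

Lemma dvd_bound (x y : int) e : (1 < `|x|)%N -> y != 0 -> (x ^+ e %| y)%Z -> (e <= `|y|)%N.
Proof.
move=> x1 y0; rewrite dvdzE abszX => /dvdn_leq.
rewrite absz_gt0 y0 => /(_ isT) h.
exact: ltnW (leq_trans (ltn_expl e x1) h).
Qed.

Lemma omega_eq (x y : int) f : (1 < `|x|)%N -> y != 0 -> (x ^+ f %| y)%Z ->
  ~~ (x ^+ f.+1 %| y)%Z -> omega x y = f.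
Proof.
move=> x1 y0 hf hf1; rewrite /omega; apply/eqP; rewrite eqn_leq; apply/andP; split.
  apply/bigmax_leqP => e he; rewrite leqNgt; apply/negP => fe.
  by move: hf1; rewrite (dvdz_trans (dvdz_exp2l x fe) he).
have hb : (f < (`|y|%N).+1)%N by rewrite ltnS (dvd_bound x y f x1 y0 hf).
exact: (@leq_bigmax_cond _ (fun e : 'I_ _ => (x ^+ e %| y)%Z) (fun e => nat_of_ord e) (Ordinal hb)).
Qed.

Lemma val_exists (x y : int) : (1 < `|x|)%N -> y != 0 ->
  exists f, (x ^+ f %| y)%Z /\ ~~ (x ^+ f.+1 %| y)%Z.
Proof.
move=> x1 y0.
have ex : exists i, (fun e => (x ^+ e %| y)%Z) i by exists 0%N; rewrite expr0 dvd1z.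
have ub : forall i, (fun e => (x ^+ e %| y)%Z) i -> (i <= `|y|)%N.
  by move=> i; apply: dvd_bound.
case: (ex_maxnP ex ub) => i hi hmax; exists i; split => //.
by apply/negP => /hmax; rewrite ltnn.
Qed.



Lemma coefXaddC (c : int) M k : (('X + c%:P) ^+ M)`_k = ('C(M,k))%:Z * c ^+ (M - k).
Proof.
rewrite addrC exprDn coef_sum.
under eq_bigr => i _ do rewrite coefMn -polyC_exp coefCM coefXn.
case: (ltnP M k) => hk.
  rewrite bin_small // mul0r big1 // => i _.
  have : k != i by rewrite neq_ltn (leq_trans (ltn_ord i) hk) orbT.
  by move/negbTE => ->; rewrite mulr0 mul0rn.
have hk' : (k < M.+1)%N by [].
rewrite (bigD1 (Ordinal hk')) //= eqxx mulr1 big1 ?addr0.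
  by rewrite -mulr_natl natz.
move=> i /eqP hi; have : k != i by apply/eqP => ki; apply: hi; apply: val_inj.
by move/negbTE => ->; rewrite mulr0 mul0rn.
Qed.

Definition Ssum (N : nat) (x : int) : int :=
  \sum_(k < N.+1) ('C(N, k) ^ 2)%N%:Z * (x + 1) ^+ k * (x - 1) ^+ (N - k).
Definition Tsum (N : nat) (x : int) : int :=
  \sum_(i < N.+1) (-1) ^+ (N - i) * ('C(N, i) * 'C(2 * i, N))%N%:Z * x ^+ (2 * i - N).

Lemma S_eq_T N x : Ssum N x = Tsum N x.
Proof.
pose q := ('X + (x - 1)%:P) ^+ N * ('X + (x + 1)%:P) ^+ N.
have h1 : q`_N = Ssum N x.
  rewrite /q coefM /Ssum; apply: eq_bigr => [[j hj]] _ /=.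
  rewrite !coefXaddC bin_sub // subKn // PoszM; ring.
have h2 : q = (-1 + ('X + x%:P) ^+ 2) ^+ N.
  rewrite /q -exprMn; congr (_ ^+ _).
  rewrite rmorphB rmorphD /= polyC1; ring.
rewrite -h1 h2 exprDn coef_sum /Tsum; apply: eq_bigr => [[i hi]] _ /=.
rewrite coefMn -exprM -polyC1 -polyCN -polyC_exp coefCM coefXaddC.
rewrite -mulr_natl natz !PoszM; ring.
Qed.

Lemma odd_split (x : int) : odd `|x|%N -> exists u v : int, x + 1 = 2 * u /\ x - 1 = 2 * v.
Proof.
move=> hodd.
have [m hm] : exists m, `|x|%N = (2 * m + 1)%N.
  by exists (`|x|%N ./2); rewrite -{1}(odd_double_half `|x|%N) hodd; lia.
case: x hm {hodd} => n /= hm.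
  exists (m + 1)%:Z, m%:Z; rewrite hm; lia.
exists (- m%:Z), (- (m + 1)%:Z); rewrite NegzE hm; lia.
Qed.

Lemma two_dvd_S N x : odd `|x|%N -> (2 ^+ N %| Ssum N x)%Z.
Proof.
move=> /odd_split [u [v [hu hv]]].
apply: rpred_sum => [[k hk]] _ /=; rewrite hu hv !exprMn.
have -> : (2 : int) ^+ N = 2 ^+ k * 2 ^+ (N - k) by rewrite -exprD subnKC.
apply/dvdzP; exists (('C(N, k) ^ 2)%N%:Z * u ^+ k * v ^+ (N - k)); ring.
Qed.

Lemma leg_mul N x : odd `|x|%N -> legendre N x * 2 ^+ N = Ssum N x.
Proof. by move=> ho; rewrite /legendre -/(Ssum N x) divzK // two_dvd_S. Qed.

Lemma dvd_leg N x e : odd `|x|%N ->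
  (x ^+ e %| legendre N x)%Z = (x ^+ e %| Ssum N x)%Z.
Proof.
move=> ho; rewrite -leg_mul // Gauss_dvdzl // coprimezE !abszX.
by apply/coprimeXl/coprimeXr; rewrite coprimen2.
Qed.

Lemma leg_nz N x : odd `|x|%N -> Ssum N x != 0 -> legendre N x != 0.
Proof. by move=> ho; apply: contraNneq => h; rewrite -leg_mul // h mul0r. Qed.

Lemma x_gt1 (x : int) : odd `|x|%N -> x != 1 -> x != -1 -> (1 < `|x|)%N.
Proof.
case: x => m /= ho h1 h2.
  by case: m ho h1 h2 => [|[|m]].
by case: m ho h1 h2 => [|[|m]].
Qed.

Lemma even_rest n x f : odd `|x|%N -> (x ^+ f %| ('C(2 * n, n))%:Z)%Z ->
  (x ^+ f.+1 %| Tsum (2 * n) x - (-1) ^+ n * ('C(2 * n, n))%:Z)%Z.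
Proof.
move=> ho hf.
have hn : (n < (2 * n).+1)%N by lia.
rewrite /Tsum (bigD1 (Ordinal hn)) //=.
have -> : (2 * n - n = n)%N by lia.
rewrite subnn expr0 mulr1 binn muln1 [X in X - _]addrC addrK.
apply: rpred_sum => [[i hi]] /= hne.
have hin : i != n by apply: contra hne => /eqP e; apply/eqP/val_inj.
case: (ltnP i n) => hi2.
  by rewrite (@bin_small (2 * i) (2 * n)) ?muln0 ?mulr0 ?mul0r ?dvdz0 //; lia.
have hi3 : (n < i)%N by rewrite ltn_neqAle eq_sym hin hi2.
have [j hj] : exists j, i = (n + j)%N by exists (i - n)%N; lia.
subst i.
have j0 : (0 < j)%N by lia.
have jn : (j <= n)%N by lia.
have -> : (2 * (n + j) - 2 * n = 2 * j)%N by lia.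
rewrite -mulrA; apply: dvdz_mull; rewrite dvdzE abszM !abszX absz_nat.
apply: even_term => //.
by move: hf; rewrite dvdzE abszX absz_nat.
Qed.

Lemma even_case n x f : odd `|x|%N -> (1 < `|x|)%N ->
  (x ^+ f %| ('C(2 * n, n))%:Z)%Z -> ~~ (x ^+ f.+1 %| ('C(2 * n, n))%:Z)%Z ->
  legendre (2 * n) x != 0 /\ omega x (legendre (2 * n) x) = f.
Proof.
move=> ho x1 hf hf1.
have hR := even_rest n x f ho hf.
set c := ('C(2 * n, n))%:Z in hf hf1 hR.
set T := Tsum (2 * n) x in hR.
have hT1 : ~~ (x ^+ f.+1 %| T)%Z.
  apply: contra hf1 => hT.
  have : (x ^+ f.+1 %| (-1) ^+ n * c)%Z.
    by rewrite -(opprK ((-1) ^+ n * c)) rpredN -(addKr T (- _)) rpredD ?rpredN // addrC.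
  by rewrite !dvdzE abszMsign.
have hT : (x ^+ f %| T)%Z.
  have -> : T = (T - (-1) ^+ n * c) + (-1) ^+ n * c by rewrite subrK.
  rewrite rpredD ?dvdz_mull //.
  exact: dvdz_trans (dvdz_exp2l x (leqnSn f)) hR.
have T0 : T != 0 by apply: contraNneq hT1 => ->; rewrite dvdz0.
have S0 : Ssum (2 * n) x != 0 by rewrite S_eq_T.
have L0 := leg_nz _ _ ho S0.
split => //; apply: omega_eq => //; rewrite dvd_leg // S_eq_T //.
Qed.

Lemma b0_id n : ('C((2 * n).+1, n + 1) * 'C(2 * (n + 1), (2 * n).+1) = 2 * ((2 * n).+1 * 'C(2 * n, n)))%N.
Proof.
have := odd_id n 0 (leq0n n).
rewrite !addn0 muln0 bin0 fact0 Fp1 /= !muln1 mul1n => ->.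
ring.
Qed.

Lemma odd_rest n x f : odd `|x|%N -> (x ^+ f %| ((2 * n).+1 * 'C(2 * n, n))%N%:Z)%Z ->
  (x ^+ f.+2 %| Tsum (2 * n).+1 x - (-1) ^+ n * (2 * ((2 * n).+1 * 'C(2 * n, n)))%N%:Z * x)%Z.
Proof.
move=> ho hf.
have hn : (n + 1 < (2 * n).+2)%N by lia.
rewrite /Tsum (bigD1 (Ordinal hn)) //=.
have -> : ((2 * n).+1 - (n + 1) = n)%N by lia.
have -> : (2 * (n + 1) - (2 * n).+1 = 1)%N by lia.
rewrite b0_id expr1 [X in X - _]addrC addrK.
apply: rpred_sum => [[i hi]] /= hne.
have hin : i != (n + 1)%N by apply: contra hne => /eqP e; apply/eqP/val_inj.
case: (ltnP i (n + 1)) => hi2.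
  by rewrite (@bin_small (2 * i) (2 * n).+1) ?muln0 ?mulr0 ?mul0r ?dvdz0 //; lia.
have hi3 : (n + 1 < i)%N by rewrite ltn_neqAle eq_sym hin hi2.
have [j hj] : exists j, i = (n + 1 + j)%N by exists (i - n - 1)%N; lia.
subst i.
have j0 : (0 < j)%N by lia.
have jn : (j <= n)%N by lia.
have -> : (2 * (n + 1 + j) - (2 * n).+1 = (2 * j).+1)%N by lia.
rewrite -mulrA; apply: dvdz_mull; rewrite dvdzE abszX [X in (_ %| X)%N]abszM abszX absz_nat.
apply: odd_term => //.
by move: hf; rewrite dvdzE abszX absz_nat.
Qed.

Lemma odd_case n x f : odd `|x|%N -> (1 < `|x|)%N ->
  (x ^+ f %| ((2 * n).+1 * 'C(2 * n, n))%N%:Z)%Z ->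
  ~~ (x ^+ f.+1 %| ((2 * n).+1 * 'C(2 * n, n))%N%:Z)%Z ->
  legendre (2 * n).+1 x != 0 /\ omega x (legendre (2 * n).+1 x) = f.+1.
Proof.
move=> ho x1 hf hf1.
have hR := odd_rest n x f ho hf.
set D := ((2 * n).+1 * 'C(2 * n, n))%N in hf hf1 hR.
set T := Tsum (2 * n).+1 x in hR.
set m0 := (-1) ^+ n * (2 * D)%N%:Z * x in hR.
have X0 : (0 < `|x|)%N by apply: ltnW.
have nf : (`|x| ^ f %| D)%N by move: hf; rewrite dvdzE abszX absz_nat.
have nf1 : ~~ (`|x| ^ f.+1 %| D)%N by move: hf1; rewrite dvdzE abszX absz_nat.
have am0 : `|m0|%N = (2 * D * `|x|)%N by rewrite /m0 abszM abszMsign absz_nat.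
have hm1 : (x ^+ f.+1 %| m0)%Z.
  rewrite dvdzE am0 abszX expnSr; apply: dvdn_mul => //; exact: dvdn_mull.
have hm2 : ~~ (x ^+ f.+2 %| m0)%Z.
  rewrite dvdzE am0 abszX expnSr dvdn_pmul2r // Gauss_dvdr //.
  by apply/coprimeXl; rewrite coprimen2.
have hT1 : ~~ (x ^+ f.+2 %| T)%Z.
  apply: contra hm2 => hT.
  by rewrite -(opprK m0) rpredN -(addKr T (- _)) rpredD ?rpredN // addrC.
have hT : (x ^+ f.+1 %| T)%Z.
  have -> : T = (T - m0) + m0 by rewrite subrK.
  rewrite rpredD //.
  exact: dvdz_trans (dvdz_exp2l x (leqnSn f.+1)) hR.
have T0 : T != 0 by apply: contraNneq hT1 => ->; rewrite dvdz0.
have S0 : Ssum (2 * n).+1 x != 0 by rewrite S_eq_T.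
have L0 := leg_nz _ _ ho S0.
split => //; apply: omega_eq => //; rewrite dvd_leg // S_eq_T //.
Qed.

Theorem corollary7 (n : nat) (x : int) (hodd : odd `|x|%N) (hx : x != 1)
    (hx' : x != -1) :
  legendre n.*2.+1 x != 0 /\ legendre n.*2 x != 0 /\
  omega x (legendre n.*2.+1 x) = (1 + omega x ((n.*2.+1 * 'C(n.*2, n))%N%:Z))%N /\
  omega x (legendre n.*2 x) = omega x ('C(n.*2, n)%:Z).
Proof.
rewrite -!mul2n.
have x1 := x_gt1 x hodd hx hx'.
have c0 : ('C(2 * n, n))%:Z != 0 by rewrite eqz_nat -lt0n bin_gt0; lia.
have d0 : ((2 * n).+1 * 'C(2 * n, n))%N%:Z != 0.
  by rewrite eqz_nat -lt0n muln_gt0 bin_gt0; lia.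
have [f [hf hf1]] := val_exists x _ x1 c0.
have [g [hg hg1]] := val_exists x _ x1 d0.
have [E1 E2] := even_case n x f hodd x1 hf hf1.
have [O1 O2] := odd_case n x g hodd x1 hg hg1.
rewrite E2 O2 (omega_eq x _ f x1 c0 hf hf1) (omega_eq x _ g x1 d0 hg hg1).
by rewrite add1n.
Qed.
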